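(* Let $H$ and $L$ be Hilbert spaces, let $T:H\to L$ be a bounded linear operator, and let $\mathcal{A}\subset H$ be nonempty. Suppose $T$ is bi-Lipschitz from $\mathcal{A}$ to $L$ with constants $\alpha,\beta>0$, i.e. $\alpha\|f_1-f_2\|^2\le\|T(f_1-f_2)\|^2\le\beta\|f_1-f_2\|^2$ for all $f_1,f_2\in\mathcal{A}$. Let $f\in H$, $e\in L$ and $g=Tf+e$. Let $\epsilon,\delta>0$. Let $f_{opt}^\epsilon\in\mathcal{A}$ be any element with $\|g-Tf_{opt}^\epsilon\|^2\le\inf_{h\in\mathcal{A}}\|g-Th\|^2+\epsilon$, and let $f_{\mathcal{A}}^\delta\in\mathcal{A}$ be any element with $\|f-f_{\mathcal{A}}^\delta\|^2\le\inf_{h\in\mathcal{A}}\|f-h\|^2+\delta$. Then \[ \|f-f_{opt}^\epsilon\|\le\frac{2}{\sqrt{\alpha}}\|T(f-f_{\mathcal{A}}^\delta)+e\|+\inf_{\tilde f\in\mathcal{A}}\|f-\tilde f\|+\frac{\sqrt{\epsilon}}{\sqrt{\alpha}}+\sqrt{\delta}. \]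
   Context: The elements $f_{opt}^\epsilon$ (''$\epsilon$-optimal estimates'') and $f_{\mathcal{A}}^\delta$ (a ''$\delta$-projection'' of $f$ onto $\mathcal{A}$) exist since $\mathcal{A}$ is nonempty and $\epsilon,\delta>0$. *)

(* Defs.v *)
From HB Require Import structures.
From mathcomp Require Import all_boot all_order all_algebra.
From mathcomp Require Import all_classical all_reals all_analysis.
Set Implicit Arguments. Unset Strict Implicit. Unset Printing Implicit Defensive.
Import Order.TTheory GRing.Theory Num.Theory.
Import numFieldNormedType.Exports.
Local Open Scope classical_set_scope.
Local Open Scope ring_scope.

Definition inner_product_of_norm (R : realType) (H : normedModType R)
    (ip : H -> H -> R) : Prop :=
  [/\ (forall x y, ip x y = ip y x),
      (forall (a : R) (x y z : H), ip (a *: x + y) z = a * ip x z + ip y z)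
    & (forall x, `|x| ^+ 2 = ip x x)].

Definition hilbert_space (R : realType) (H : completeNormedModType R) : Prop :=
  exists ip : H -> H -> R, inner_product_of_norm ip.

(* Main.v *)
Require Import Defs.
From HB Require Import structures.
From mathcomp Require Import all_boot all_order all_algebra.
From mathcomp Require Import all_classical all_reals all_analysis.
From mathcomp Require Import ring lra.
Import Order.TTheory GRing.Theory Num.Theory.
Import numFieldNormedType.Exports.
Local Open Scope classical_set_scope.
Local Open Scope ring_scope.

Theorem mainTheorem2 (R : realType) (H L : completeNormedModType R)
  (hH : hilbert_space H) (hL : hilbert_space L)
  (T : {linear H -> L}) (hTc : continuous T)
  (A : set H) (hA : A !=set0)
  (alpha beta : R) (halpha : 0 < alpha) (hbeta : 0 < beta)
  (hbiL : forall f1 f2, A f1 -> A f2 ->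
      alpha * `|f1 - f2| ^+ 2 <= `|T (f1 - f2)| ^+ 2 /\
      `|T (f1 - f2)| ^+ 2 <= beta * `|f1 - f2| ^+ 2)
  (f : H) (e : L) (g : L) (hg : g = T f + e)
  (eps delta : R) (heps : 0 < eps) (hdelta : 0 < delta)
  (fopt fA : H) (hfopt : A fopt)
  (hfopt_min : `|g - T fopt| ^+ 2 <= inf [set `|g - T h| ^+ 2 | h in A] + eps)
  (hfA : A fA)
  (hfA_min : `|f - fA| ^+ 2 <= inf [set `|f - h| ^+ 2 | h in A] + delta) :
  `|f - fopt| <= 2 / Num.sqrt alpha * `|T (f - fA) + e|
                 + inf [set `|f - h| | h in A]
                 + Num.sqrt eps / Num.sqrt alpha + Num.sqrt delta.
Proof.
have infle : forall (S : set R) x, (forall y, S y -> 0 <= y) -> S x -> inf S <= x.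
  move=> S x S0 Sx; apply: (ge_inf _ Sx); by exists 0 => y /S0.
have sqle : forall a b : R, 0 <= b -> a ^+ 2 <= b ^+ 2 -> a <= b.
  move=> a b b0 h; case: (lerP a b) => // ab; nra.
set s := Num.sqrt alpha.
have s0 : 0 < s by rewrite sqrtr_gt0.
have ss : s ^+ 2 = alpha by rewrite sqr_sqrtr // ltW.
set se := Num.sqrt eps.
have se0 : 0 <= se by exact: sqrtr_ge0.
have sse : se ^+ 2 = eps by rewrite sqr_sqrtr // ltW.
set sd := Num.sqrt delta.
have sd0 : 0 <= sd by exact: sqrtr_ge0.
have ssd : sd ^+ 2 = delta by rewrite sqr_sqrtr // ltW.
have gA : g - T fA = T (f - fA) + e by rewrite hg linearB /=; rewrite addrAC.
have h1 : `|g - T fopt| <= `|g - T fA| + se.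
  apply sqle; first by rewrite addr_ge0.
  have : inf [set `|g - T h| ^+ 2 | h in A] <= `|g - T fA| ^+ 2.
    apply infle; last by exists fA.
    by move=> y [h _ <-]; rewrite sqr_ge0.
  have := normr_ge0 (g - T fA); nra.
have h2 : `|f - fA| <= inf [set `|f - h| | h in A] + sd.
  have -> : inf [set `|f - h| | h in A] + sd = inf [set `|f - h| | h in A] - (- sd) by rewrite opprK.
  rewrite -lerBlDr; apply: lb_le_inf.
    by case: hA => h Ah; exists `|f - h|, h.
  move=> y [h Ah <-]; rewrite lerBlDr opprK.
  apply sqle; first by rewrite addr_ge0.
  have : inf [set `|f - h| ^+ 2 | h in A] <= `|f - h| ^+ 2.
    apply infle; last by exists h.
    by move=> z [k _ <-]; rewrite sqr_ge0.
  have := normr_ge0 (f - h); nra.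
have h3 : s * `|fA - fopt| <= `|T (fA - fopt)|.
  have [hb _] := hbiL _ _ hfA hfopt.
  apply sqle => //; rewrite exprMn ss //.
have h4 : `|T (fA - fopt)| <= `|g - T fopt| + `|g - T fA|.
  have -> : T (fA - fopt) = (g - T fopt) - (g - T fA).
    by rewrite linearB /= opprB [RHS]addrC [RHS]addrA subrK.
  
  exact: ler_normB.
have h5 : `|f - fopt| <= `|f - fA| + `|fA - fopt|.
  have -> : f - fopt = (f - fA) + (fA - fopt) by rewrite addrA subrK.
  exact: ler_normD.
rewrite gA in h1 h4.
set a := `|T (f - fA) + e| in h1 h4 *.
set m := inf _ in h2 *.
have : `|fA - fopt| <= (2 * a + se) / s.
  by rewrite ler_pdivlMr // mulrC; lra.
rewrite mulrDl mulrAC => hh; lra.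
Qed.
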